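(* Let $|\psi\rangle,|\phi\rangle,|e\rangle,|f\rangle$ be unit vectors in $\mathbb{C}^2$ and let $\mathcal{C}$ be the set of all quantum channels on $\mathcal{L}(\mathbb{C}^2)$. Then $$\max_{\Psi\in\mathcal{C}}\left\{\frac12\langle e|\Psi(|\psi\rangle\langle\psi|)|e\rangle+\frac12\langle f|\Psi(|\phi\rangle\langle\phi|)|f\rangle\right\}\le\frac12\left(1+\sqrt{|\langle e|f\rangle|^2+\left(|\langle\psi|\phi\rangle||\langle e|f\rangle|+\sqrt{(1-|\langle\psi|\phi\rangle|^2)(1-|\langle e|f\rangle|^2)}\right)^2}\right).$$
   Context: A quantum channel is a linear, completely positive, trace preserving map on $\mathcal{L}(\mathbb{C}^2)$. *)

(* Defs.v *)
From HB Require Import structures.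
From mathcomp Require Import all_boot all_order all_algebra.
From mathcomp Require Import complex.
From mathcomp Require Import reals.
Set Implicit Arguments. Unset Strict Implicit. Unset Printing Implicit Defensive.
Import Order.TTheory GRing.Theory Num.Theory.
Local Open Scope ring_scope.

Section Defs.
Variable R : realType.
Local Notation C := (R[i]).

Definition ip (u v : 'cV[C]_2) : C := \sum_(k < 2) (u k 0)^* * v k 0.

Definition unit_vec (u : 'cV[C]_2) : Prop := ip u u = 1.

Definition proj (u : 'cV[C]_2) : 'M[C]_2 :=
  \matrix_(i < 2, j < 2) (u i 0 * (u j 0)^*).

Definition expect (u : 'cV[C]_2) (M : 'M[C]_2) : C :=
  \sum_(i < 2) \sum_(j < 2) (u i 0)^* * M i j * u j 0.

Definition psd (I : finType) (M : I -> I -> C) : Prop :=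
  forall v : I -> C, 0 <= \sum_(p : I) \sum_(q : I) (v p)^* * M p q * v q.

Definition lin_map (Psi : 'M[C]_2 -> 'M[C]_2) : Prop :=
  forall (a : C) (A B : 'M[C]_2), Psi (a *: A + B) = a *: Psi A + Psi B.

(* complete positivity: id_{M_n} (x) Psi is positive for every n.
   An element of M_n (x) M_2 is given by its 2x2 blocks X p q, p q : 'I_n;
   as an operator on C^n (x) C^2 = C^('I_n * 'I_2) its entries are
   ((p,a),(q,b)) |-> X p q a b. *)
Definition completely_positive (Psi : 'M[C]_2 -> 'M[C]_2) : Prop :=
  forall (n : nat) (X : 'I_n -> 'I_n -> 'M[C]_2),
    psd (fun (x y : 'I_n * 'I_2) => X x.1 y.1 x.2 y.2) ->
    psd (fun (x y : 'I_n * 'I_2) => Psi (X x.1 y.1) x.2 y.2).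

Definition trace_preserving (Psi : 'M[C]_2 -> 'M[C]_2) : Prop :=
  forall A : 'M[C]_2, \tr (Psi A) = \tr A.

Definition quantum_channel (Psi : 'M[C]_2 -> 'M[C]_2) : Prop :=
  [/\ lin_map Psi, completely_positive Psi & trace_preserving Psi].

End Defs.

(* Main.v *)
Require Import Defs.
From HB Require Import structures.
From mathcomp Require Import all_boot all_order all_algebra.
From mathcomp Require Import complex.
From mathcomp Require Import reals ring lra.
Import Order.TTheory GRing.Theory Num.Theory.
Set Implicit Arguments. Unset Strict Implicit.
Local Open Scope ring_scope.
Local Open Scope ring_scope.
Lemma sqrt_le_of (R : rcfType) (x y : R) : 0 <= y -> x ^+ 2 <= y -> x <= Num.sqrt y.
Proof.
move=> y0 h; case: (lerP x 0) => [x0|x0]; first by apply: le_trans x0 _; rewrite sqrtr_ge0.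
by rewrite -(ger0_norm (ltW x0)) -sqrtr_sqr ler_sqrt.
Qed.

Lemma sq_le (R : rcfType) (x y : R) : 0 <= x -> 0 <= y -> x ^+ 2 <= y ^+ 2 -> x <= y.
Proof. by move=> x0 y0; rewrite ler_pXn2r ?nnegrE. Qed.

Lemma scalar_ineq (R : rcfType) (P Q t1 t2 A B S m qr : R) :
  0 <= P -> P <= 1 -> 0 <= Q -> Q <= 1 -> 0 <= t1 -> 0 <= t2 ->
  t1 ^+ 2 <= P * Q -> t2 ^+ 2 <= (1 - P) * (1 - Q) ->
  0 <= A -> A <= t1 + t2 -> 0 <= B -> 0 <= S -> B ^+ 2 + S ^+ 2 = 1 ->
  0 <= m -> m ^+ 2 <= Q * (1 - Q) ->
  qr <= B ^+ 2 * Q + S ^+ 2 * (1 - Q) + 2 * B * S * m ->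
  A <= 1 /\
  P + qr <= 1 + Num.sqrt (B ^+ 2 + (A * B + Num.sqrt ((1 - A ^+ 2) * (1 - B ^+ 2))) ^+ 2).
Proof.
move=> P0 P1 Q0 Q1 t10 t20 ht1 ht2 A0 At B0 S0 BS m0 hm hq.
set u := Num.sqrt P; set u' := Num.sqrt (1 - P).
set v := Num.sqrt Q; set v' := Num.sqrt (1 - Q).
have u0 : 0 <= u by rewrite sqrtr_ge0.
have u'0 : 0 <= u' by rewrite sqrtr_ge0.
have v0 : 0 <= v by rewrite sqrtr_ge0.
have v'0 : 0 <= v' by rewrite sqrtr_ge0.
have uu : u ^+ 2 = P by rewrite sqr_sqrtr.
have uu' : u' ^+ 2 = 1 - P by rewrite sqr_sqrtr // subr_ge0.
have vv : v ^+ 2 = Q by rewrite sqr_sqrtr.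
have vv' : v' ^+ 2 = 1 - Q by rewrite sqr_sqrtr // subr_ge0.
have t1le : t1 <= u * v.
  have : t1 ^+ 2 <= (u * v) ^+ 2 by rewrite exprMn uu vv.
  move=> h; apply: sq_le => //; nra.
have t2le : t2 <= u' * v'.
  have : t2 ^+ 2 <= (u' * v') ^+ 2 by rewrite exprMn uu' vv'.
  move=> h; apply: sq_le => //; nra.
have mle : m <= v * v'.
  have : m ^+ 2 <= (v * v') ^+ 2 by rewrite exprMn vv vv'.
  move=> h; apply: sq_le => //; nra.
set w := u * v + u' * v'.
set z := u * v' - u' * v.
have wz : w ^+ 2 + z ^+ 2 = 1.
  have -> : w ^+ 2 + z ^+ 2 = (u ^+ 2 + u' ^+ 2) * (v ^+ 2 + v' ^+ 2) by rewrite /w /z; ring.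
  by rewrite uu uu' vv vv'; ring.
have Aw : A <= w by rewrite /w; lra.
have w1 : w <= 1.
  have h := sqr_ge0 z.
  case: (lerP w 0) => w0; [lra | apply: sq_le => //; rewrite ?expr1n; lra].
have A1 : A <= 1 by lra.
split => //.
set a' := Num.sqrt (1 - A ^+ 2).
have a'0 : 0 <= a' by rewrite sqrtr_ge0.
have aa : a' ^+ 2 = 1 - A ^+ 2 by rewrite sqr_sqrtr // subr_ge0; nra.
have SS : S = Num.sqrt (1 - B ^+ 2).
  by rewrite -BS addrC addKr sqrtr_sqr ger0_norm.
have -> : Num.sqrt ((1 - A ^+ 2) * (1 - B ^+ 2)) = a' * S.
  by rewrite sqrtrM ?subr_ge0 -?SS //; nra.
set K := A * B + a' * S.
set c2 := B * v + S * v'.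
have qc : qr <= c2 ^+ 2.
  have BS0 := mulr_ge0 B0 S0.
  have h : B * S * m <= B * S * (v * v') by apply: ler_wpM2l.
  rewrite -vv' -vv in hq; rewrite /c2; nra.
have c2le : c2 ^+ 2 <= 1.
  have : c2 ^+ 2 + (S * v - B * v') ^+ 2 = (B ^+ 2 + S ^+ 2) * (v ^+ 2 + v' ^+ 2) by rewrite /c2; ring.
  rewrite BS vv vv' => h; have := sqr_ge0 (S * v - B * v'); nra.
have K0 : 0 <= K by rewrite /K; nra.
case: (lerP B A) => BA.
- have Ka : a' <= S by nra.
  have zle : z <= a'.
    have : z ^+ 2 <= a' ^+ 2 by rewrite aa; nra.
    move=> h; case: (lerP z 0) => z0; [lra| apply: sq_le => //; lra].
  set Xp := B * w + S * z.
  have XK : Xp <= K.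
    have h1 : 1 - A * w - a' * z >= 0 by nra.
    rewrite /Xp /K; nra.
  set Bq := u * c2 + u' * (S * v - B * v').
  have N2 : c2 ^+ 2 + (S * v - B * v') ^+ 2 = 1.
    rewrite -[RHS](_ : (B ^+ 2 + S ^+ 2) * (v ^+ 2 + v' ^+ 2) = 1); last by rewrite BS vv vv'; ring.
    by rewrite /c2; ring.
  have N1 : u ^+ 2 + u' ^+ 2 = 1 by rewrite uu uu'; ring.
  have id : u ^+ 2 + c2 ^+ 2 - 1 = Xp * Bq.
    have -> : Xp * Bq = u ^+ 2 * (c2 ^+ 2 + (S * v - B * v') ^+ 2) + c2 ^+ 2 * (u ^+ 2 + u' ^+ 2)
       - (u ^+ 2 + u' ^+ 2) * (c2 ^+ 2 + (S * v - B * v') ^+ 2) by rewrite /Xp /Bq /c2 /w /z; ring.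
    by rewrite N1 N2; ring.
  have XB : Xp + Bq = 2 * u * c2 by rewrite /Xp /Bq /c2 /w /z; ring.
  have c20 : 0 <= c2 by rewrite /c2; nra.
  have Bq1 : Bq <= 1.
    have : Bq ^+ 2 <= 1.
      have : Bq ^+ 2 + (u * (S * v - B * v') - u' * c2) ^+ 2 = (u ^+ 2 + u' ^+ 2) * (c2 ^+ 2 + (S * v - B * v') ^+ 2) by rewrite /Bq; ring.
      rewrite N1 N2 => h; have := sqr_ge0 (u * (S * v - B * v') - u' * c2); nra.
    move=> h; case: (lerP Bq 0) => z0; [lra| apply: sq_le => //; lra].
  have XBK : Xp * Bq <= K.
    have uc0 : 0 <= 2 * u * c2 by rewrite -mulrA; apply: mulr_ge0 => //; apply: mulr_ge0.
    case: (lerP 0 Xp) => X0.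
      have h : 0 <= Xp * (1 - Bq) by apply: mulr_ge0; lra.
      nra.
    have h : 0 <= (- Xp) * Bq by apply: mulr_ge0; lra.
    nra.
  have KS : K <= Num.sqrt (B ^+ 2 + K ^+ 2) by apply: sqrt_le_of; nra.
  rewrite -uu; lra.
- have Sa : S <= a' by nra.
  have KS : S <= K.
    have : 1 - a' >= 0 by nra.
    rewrite /K; nra.
  have : 1 <= Num.sqrt (B ^+ 2 + K ^+ 2) by apply: sqrt_le_of; nra.
  lra.
Qed.
Section Aux.
Variable R : realType.
Local Notation C := R[i].
Local Notation rC x := (real_complex R x).

Lemma sum2 (F : 'I_2 -> C) : \sum_(i < 2) F i = F ord0 + F ord_max.
Proof. by rewrite big_ord_recl big_ord1; congr (_ + F _); apply: val_inj. Qed.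

Lemma ord2P (i : 'I_2) : i = ord0 \/ i = ord_max.
Proof. by case: i => [[|[|k]] Hk] //; [left|right]; apply: val_inj. Qed.

Definition form (M : 'M[C]_2) (x y : 'cV[C]_2) : C :=
  \sum_(i < 2) \sum_(j < 2) (x i 0)^* * M i j * y j 0.

Definition perp (e : 'cV[C]_2) : 'cV[C]_2 :=
  \col_(i < 2) (if val i == 0%N then - (e ord_max 0)^* else (e ord0 0)^*).

Lemma perp0 e : perp e ord0 0 = - (e ord_max 0)^*.
Proof. by rewrite /perp mxE. Qed.
Lemma perp1 e : perp e ord_max 0 = (e ord0 0)^*.
Proof. by rewrite /perp mxE. Qed.

Lemma form_scale M x y a b : form M (a *: x) (b *: y) = a^* * b * form M x y.
Proof. rewrite /form !sum2 !mxE !rmorphM /=; ring. Qed.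

Lemma form_comb M x y a b :
  form M (a *: x + b *: y) (a *: x + b *: y) =
  a^* * a * form M x x + a^* * b * form M x y + b^* * a * form M y x + b^* * b * form M y y.
Proof. rewrite /form !sum2 !mxE !rmorphD !rmorphM /=; ring. Qed.

Lemma form0l M y : form M 0 y = 0.
Proof. rewrite /form !sum2 !mxE !rmorph0; ring. Qed.

Lemma unitE (e : 'cV[C]_2) : unit_vec e -> (e ord0 0)^* * e ord0 0 + (e ord_max 0)^* * e ord_max 0 = 1.
Proof. by rewrite /unit_vec /ip sum2. Qed.

Lemma trace_perp (e : 'cV[C]_2) M : unit_vec e -> \tr M = form M e e + form M (perp e) (perp e).
Proof.
move=> /unitE He.
rewrite /form !sum2 perp0 perp1 !rmorphN /= !conjCK /mxtrace sum2.
apply/eqP; rewrite -subr_eq0; apply/eqP.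
set N := _ + _ in He.
rewrite [LHS](_ : _ = (1 - N) * (M ord0 ord0 + M ord_max ord_max)).
  by rewrite He subrr mul0r.
rewrite /N; ring.

Qed.

Lemma decomp (e f : 'cV[C]_2) : unit_vec e -> f = ip e f *: e + ip (perp e) f *: perp e.
Proof.
move=> /unitE He; apply/matrixP => i j.
rewrite (ord1 j) !mxE /ip !sum2 perp0 perp1 !rmorphN /= !conjCK.
set N := _ + _ in He.
case: (ord2P i) => ->; rewrite /= -[LHS]mulr1 -He /N /=; ring.
Qed.


Lemma parseval (e f : 'cV[C]_2) : unit_vec e -> unit_vec f ->
  (ip e f)^* * ip e f + (ip (perp e) f)^* * ip (perp e) f = 1.
Proof.
move=> /unitE He /unitE Hf.
rewrite /ip !sum2 perp0 perp1 !rmorphD !rmorphM !rmorphN /= !conjCK.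
set N := _ + _ in He; set N' := _ + _ in Hf.
rewrite [LHS](_ : _ = N * N'); first by rewrite He Hf mulr1.
rewrite /N /N'; ring.
Qed.

Lemma minor (m11 m12 m21 m22 : C) :
  (forall l u : C, 0 <= l^* * l * m11 + l^* * u * m12 + u^* * l * m21 + u^* * u * m22) ->
  [/\ 0 <= m11, 0 <= m22, m21 = m12^* & m12^* * m12 <= m11 * m22].
Proof.
move=> H.
have h11 : 0 <= m11.
  have := H 1 0; rewrite (_ : _ + _ = m11) //; rewrite conjC0 conjC1; ring.
have h22 : 0 <= m22.
  have := H 0 1; rewrite (_ : _ + _ = m22) //; rewrite conjC0 conjC1; ring.
have hi : 'i * 'i = -1 :> C by rewrite -expr2 sqrCi.
have e1 : m12^* + m21^* = m12 + m21.
  have h := H 1 1; rewrite (_ : _ + _ = m11 + m12 + m21 + m22) in h; last by rewrite conjC1; ring.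
  move: h => /geC0_conj; rewrite !rmorphD /= (geC0_conj h11) (geC0_conj h22) => E.
  have : m11 + (m12^* + m21^*) + m22 = m11 + (m12 + m21) + m22.
    by rewrite !addrA E.
  by move/addIr/addrI.
have e2 : m21^* - m12^* = m12 - m21.
  have h := H 1 'i.
  rewrite (_ : _ + _ = m11 + 'i * m12 - 'i * m21 + m22) in h; last first.
    rewrite conjC1 conjCi !mulNr hi; ring.
  move: h => /geC0_conj; rewrite !rmorphD !rmorphN !rmorphM /= (geC0_conj h11) (geC0_conj h22) conjCi => E.
  have E' : 'i * (m21^* - m12^*) = 'i * (m12 - m21).
    have : m11 + 'i * (m21^* - m12^*) + m22 = m11 + 'i * (m12 - m21) + m22.
      rewrite (_ : m11 + 'i * (m12 - m21) + m22 = m11 + 'i * m12 - 'i * m21 + m22); last by ring.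
      rewrite -E; ring.
    by move/addIr/addrI.
  move: E'; apply: mulfI; by rewrite -normr_eq0 normCi oner_neq0.
have e21 : m21 = m12^*.
  have : 2%:R * m21^* = 2%:R * m12.
    rewrite mulr_natl mulr2n -{1}(subrK m12^* m21^*) e2.
    have -> : m12 - m21 + m12^* + m21^* = m12 - m21 + (m12^* + m21^*) by ring.
    rewrite e1; ring.
  have n2 : (2%:R : C) != 0 by rewrite pnatr_eq0.
  move/(mulfI n2) => h.
  by rewrite -h conjCK.
split => //.
have k0 : 0 <= m12^* * m12 by rewrite mulrC mul_conjC_ge0.
have [z22|nz22] := eqVneq m22 0.
  rewrite z22 mulr0.
  have [zk|nzk] := eqVneq (m12^* * m12) 0; first by rewrite zk.
  exfalso.
  have kp : 0 < m12^* * m12 by rewrite lt_def nzk k0.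
  set k := m12^* * m12 in k0 kp nzk.
  set t := (m11 + 1) / k.
  have t0 : 0 <= t by rewrite /t divr_ge0 // addr_ge0.
  have h := H 1 (- t * m12^*).
  rewrite (_ : _ + _ = - m11 - 2%:R) in h; last first.
    rewrite z22 e21 !rmorphM !rmorphN /= conjCK conjC1 (geC0_conj t0) /t.
    have nz12 : m12 != 0 by apply/eqP => z; move: nzk; rewrite /k z mulr0 eqxx.
    rewrite /k; field; by rewrite nz12 /= fmorph_eq0 nz12.
  have : 0 <= m11 + (- m11 - 2%:R) by rewrite addr_ge0.
  rewrite addrA subrr add0r oppr_ge0 => h2.
  by have := lt_le_trans (ltr0Sn C 1) h2; rewrite ltxx.
have p22 : 0 < m22 by rewrite lt_def nz22 h22.
have h := H m22 (- m12^*).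
rewrite (_ : _ + _ = m22 * (m11 * m22 - m12^* * m12)) in h; last first.
  by rewrite e21 !rmorphN /= conjCK (geC0_conj h22); ring.
by move: h; rewrite pmulr_rge0 // subr_ge0.
Qed.

Lemma sum22 (F : 'I_2 * 'I_2 -> C) : \sum_x F x =
  F (ord0, ord0) + F (ord0, ord_max) + F (ord_max, ord0) + F (ord_max, ord_max).
Proof.
rewrite (eq_bigr (fun p => F (p.1, p.2))); last by case.
rewrite -(pair_bigA _ (fun i j => F (i, j))) /= !sum2; ring.
Qed.

Lemma cp_step (Psi : 'M[C]_2 -> 'M[C]_2) (psi phi : 'cV[C]_2) :
  completely_positive Psi -> forall g h : 'cV[C]_2,
  0 <= form (Psi (proj psi)) g g + form (Psi (\matrix_(i < 2, j < 2) (psi i 0 * (phi j 0)^*))) g h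
     + form (Psi (\matrix_(i < 2, j < 2) (phi i 0 * (psi j 0)^*))) h g + form (Psi (proj phi)) h h.
Proof.
move=> cp g h.
pose U := fun p : 'I_2 => if val p == 0%N then psi else phi.
pose X := fun p q : 'I_2 => \matrix_(i < 2, j < 2) (U p i 0 * (U q j 0)^*).
have hX : psd (fun x y : 'I_2 * 'I_2 => X x.1 y.1 x.2 y.2).
  move=> v.
  pose S := \sum_(y : 'I_2 * 'I_2) (U y.1 y.2 0)^* * v y.
  have -> : \sum_(x : 'I_2 * 'I_2) \sum_(y : 'I_2 * 'I_2) (v x)^* * X x.1 y.1 x.2 y.2 * v y = S^* * S.
    rewrite /S rmorph_sum mulr_suml; apply: eq_bigr => x _.
    rewrite mulr_sumr; apply: eq_bigr => y _.
    rewrite /X mxE !rmorphM /= conjCK; ring.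
  by rewrite mulrC mul_conjC_ge0.
pose v := fun x : 'I_2 * 'I_2 => if val x.1 == 0%N then g x.2 0 else h x.2 0.
have := cp 2 X hX v.
rewrite sum22 !sum22 /=.
have -> : X ord0 ord0 = proj psi by [].
have -> : X ord_max ord_max = proj phi by [].
have -> : X ord0 ord_max = \matrix_(i < 2, j < 2) (psi i 0 * (phi j 0)^*) by [].
have -> : X ord_max ord0 = \matrix_(i < 2, j < 2) (phi i 0 * (psi j 0)^*) by [].
rewrite /v /=.
set A := _ + _; set B := _ + _.
suff -> : B = A by [].
rewrite /A /B /form !sum2; ring.
Qed.

Lemma ge0_RC (z : C) : 0 <= z -> z = rC (complex.Re z) /\ 0 <= complex.Re z.
Proof.
case: z => x y; rewrite lecE /= => /andP[/eqP y0 x0]; split => //.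
by rewrite y0.
Qed.

Lemma sqrtC_rC (x : R) : 0 <= x -> sqrtC (rC x) = rC (Num.sqrt x).
Proof.
move=> x0; rewrite -{1}(sqr_sqrtr x0) rmorphXn sqrCK //.
by rewrite ler0c sqrtr_ge0.
Qed.

Lemma form0r M x : form M x 0 = 0.
Proof. rewrite /form !sum2 !mxE; ring. Qed.

Lemma trace_proj (u : 'cV[C]_2) : unit_vec u -> \tr (proj u) = 1.
Proof. move=> <-; rewrite /mxtrace /proj /ip !sum2 !mxE; ring. Qed.

Lemma trace_T (u w : 'cV[C]_2) : \tr (\matrix_(i < 2, j < 2) (u i 0 * (w j 0)^*)) = (ip u w)^*.
Proof. rewrite /mxtrace /ip !sum2 !mxE rmorphD !rmorphM /= !conjCK; ring. Qed.


Lemma minor_cp (rho tau tau' sig : 'M[C]_2)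
  (CPq : forall g h, 0 <= form rho g g + form tau g h + form tau' h g + form sig h h) x :
  [/\ 0 <= form rho x x, 0 <= form sig x x, form tau' x x = (form tau x x)^*
    & (form tau x x)^* * form tau x x <= form rho x x * form sig x x].
Proof. apply: minor => l u; have := CPq (l *: x) (u *: x); by rewrite !form_scale. Qed.

Lemma minor_sig (rho tau tau' sig : 'M[C]_2)
  (CPq : forall g h, 0 <= form rho g g + form tau g h + form tau' h g + form sig h h) x y :
  [/\ 0 <= form sig x x, 0 <= form sig y y, form sig y x = (form sig x y)^*
    & (form sig x y)^* * form sig x y <= form sig x x * form sig y y].
Proof.
apply: minor => l u; have := CPq 0 (l *: x + u *: y).
by rewrite !form0l form0r !add0r form_comb.
Qed.

Lemma sig_ge0 (rho tau tau' sig : 'M[C]_2)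
  (CPq : forall g h, 0 <= form rho g g + form tau g h + form tau' h g + form sig h h) x :
  0 <= form sig x x.
Proof. by have := CPq 0 x; rewrite !form0l form0r !add0r. Qed.

Lemma ex_RC (z : C) : 0 <= z -> exists x, z = rC x /\ 0 <= x.
Proof. by move=> /ge0_RC [h1 h2]; exists (complex.Re z). Qed.

Lemma le_of_eq' (x y : C) : x = y -> x <= y.
Proof. by move=> ->. Qed.
End Aux.

Local Notation rC R x := (real_complex R x).

Theorem corollary5 (R : realType) (psi phi e f : 'cV[R[i]]_2)
  (Hpsi : unit_vec psi) (Hphi : unit_vec phi)
  (He : unit_vec e) (Hf : unit_vec f)
  (Psi : 'M[R[i]]_2 -> 'M[R[i]]_2) (HPsi : quantum_channel Psi) :
  let a := `|ip psi phi| in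
  let b := `|ip e f| in
  2^-1 * expect e (Psi (proj psi)) + 2^-1 * expect f (Psi (proj phi))
  <= 2^-1 * (1 + sqrtC (b ^+ 2 + (a * b + sqrtC ((1 - a ^+ 2) * (1 - b ^+ 2))) ^+ 2)).
Proof.
cbv zeta.
set a := `|ip psi phi|; set b := `|ip e f|.
case: HPsi => lin cp tp.
have CPq := @cp_step R Psi psi phi cp.
set rho := Psi (proj psi) in CPq *; set sig := Psi (proj phi) in CPq *.
set tau := Psi (\matrix_(i < 2, j < 2) (psi i 0 * (phi j 0)^*)) in CPq.
set tau' := Psi (\matrix_(i < 2, j < 2) (phi i 0 * (psi j 0)^*)) in CPq.
set ep := perp e.
have [r11g s11g t'11 t11le] := minor_cp CPq e.
have [r22g s22g t'22 t22le] := minor_cp CPq ep.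
have [_ _ s21 s12le] := minor_sig CPq e ep.
have qg := sig_ge0 CPq f.
have trr : form rho e e + form rho ep ep = 1 by rewrite -trace_perp // /rho tp trace_proj.
have trs : form sig e e + form sig ep ep = 1 by rewrite -trace_perp // /sig tp trace_proj.
have trt : form tau e e + form tau ep ep = (ip psi phi)^* by rewrite -trace_perp // /tau tp trace_T.
have pars := parseval He Hf.
have Eq : form sig f f = (ip e f)^* * ip e f * form sig e e + (ip e f)^* * ip ep f * form sig e ep
   + (ip ep f)^* * ip e f * form sig ep e + (ip ep f)^* * ip ep f * form sig ep ep.
  by rewrite -form_comb -decomp.
change (expect e rho) with (form rho e e); change (expect f sig) with (form sig f f).
set r11 := form rho e e in r11g t11le trr *.
set r22 := form rho ep ep in r22g t22le trr.
set s11 := form sig e e in s11g t11le s12le trs Eq.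
set s22 := form sig ep ep in s22g t22le s12le trs Eq.
set t11 := form tau e e in t11le trt.
set t22 := form tau ep ep in t22le trt.
set s12 := form sig e ep in s12le s21 Eq.
rewrite s21 in Eq.
set bb := ip e f in pars Eq.
set ss := ip ep f in pars Eq.
set q := form sig f f in qg Eq *.
have ab : a <= `|t11| + `|t22| by rewrite /a -norm_conjC -trt ler_normD.
have qle : q <= `|bb| ^+ 2 * s11 + `|ss| ^+ 2 * s22 + 2%:R * (`|bb| * `|ss| * `|s12|).
  rewrite Eq !normCKC.
  set w := bb^* * ss * s12.
  have -> : ss^* * bb * s12^* = w^* by rewrite /w !rmorphM /= conjCK; ring.
  have -> : `|bb| * `|ss| * `|s12| = `|w| by rewrite /w !normrM norm_conjC.
  have hw : w + w^* <= 2%:R * `|w|.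
    have := (leif_Re_Creal w).1; rewrite ReE => h.
    have -> : w + w^* = 2%:R * ((w + w^*) / 2%:R) by rewrite mulrC divfK // pnatr_eq0.
    by apply: ler_wpM2l => //; rewrite ler0n.
  have -> : bb^* * bb * s11 + w + w^* + ss^* * ss * s22 =
     bb^* * bb * s11 + ss^* * ss * s22 + (w + w^*) by ring.
  by rewrite lerD2l.
have [P [r11E P0]] := ex_RC r11g.
have [Q [s11E Q0]] := ex_RC s11g.
have [t1 [t1E t10]] := ex_RC (normr_ge0 t11).
have [t2 [t2E t20]] := ex_RC (normr_ge0 t22).
have [A [aE A0]] := ex_RC (normr_ge0 (ip psi phi)).
have [B [bE B0]] := ex_RC (normr_ge0 bb).
have [S [sE S0]] := ex_RC (normr_ge0 ss).
have [m [mE m0]] := ex_RC (normr_ge0 s12).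
have [qr [qE _]] := ex_RC qg.
have r22E : r22 = 1 - rC R P by rewrite -r11E -trr addrAC subrr add0r.
have s22E : s22 = 1 - rC R Q by rewrite -s11E -trs addrAC subrr add0r.
have P1 : P <= 1.
  by move: r22g; rewrite r22E -(rmorph1 (real_complex R)) -rmorphB ler0c subr_ge0.
have Q1 : Q <= 1.
  by move: s22g; rewrite s22E -(rmorph1 (real_complex R)) -rmorphB ler0c subr_ge0.
have ht1 : t1 ^+ 2 <= P * Q.
  by move: t11le; rewrite -normCKC t1E r11E s11E -rmorphXn -rmorphM lecR.
have ht2 : t2 ^+ 2 <= (1 - P) * (1 - Q).
  by move: t22le; rewrite -normCKC t2E r22E s22E -(rmorph1 (real_complex R)) -!rmorphB -rmorphXn -rmorphM lecR.
have At : A <= t1 + t2.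
  by move: ab; rewrite /a aE t1E t2E -rmorphD lecR.
have BS : B ^+ 2 + S ^+ 2 = 1.
  apply: complexI; rewrite rmorphD !rmorphXn /= -bE -sE !normCKC rmorph1; exact: pars.
have hm : m ^+ 2 <= Q * (1 - Q).
  by move: s12le; rewrite -normCKC mE s11E s22E -(rmorph1 (real_complex R)) -!rmorphB -rmorphXn -rmorphM lecR.
have hq : qr <= B ^+ 2 * Q + S ^+ 2 * (1 - Q) + 2%:R * B * S * m.
  rewrite -lecR -qE; apply: le_trans qle (le_of_eq' _).
  rewrite bE sE mE s11E s22E !(rmorphD, rmorphB, rmorphM, rmorphXn, rmorph1, rmorph_nat); ring.
have [A1 Hmain] := scalar_ineq P0 P1 Q0 Q1 t10 t20 ht1 ht2 A0 At B0 S0 BS m0 hm hq.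
have B1 : B ^+ 2 <= 1 by rewrite -BS lerDl sqr_ge0.
have A2 : A ^+ 2 <= 1 by rewrite -(expr1n R 2) ler_pXn2r ?nnegrE.
rewrite /a /b aE bE r11E qE.
rewrite (_ : (1 - rC R A ^+ 2) * (1 - rC R B ^+ 2) = rC R ((1 - A ^+ 2) * (1 - B ^+ 2))); last first.
  by rewrite !(rmorphD, rmorphN, rmorphB, rmorphM, rmorphXn, rmorph1) /=.
rewrite sqrtC_rC; last by apply: mulr_ge0; rewrite subr_ge0.
set sq := Num.sqrt _.
rewrite (_ : rC R B ^+ 2 + (rC R A * rC R B + rC R sq) ^+ 2 = rC R (B ^+ 2 + (A * B + sq) ^+ 2)); last first.
  by rewrite !(rmorphD, rmorphN, rmorphB, rmorphM, rmorphXn, rmorph1) /=.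
rewrite sqrtC_rC; last by apply: addr_ge0; apply: sqr_ge0.
rewrite -mulrDr; apply: ler_wpM2l; first by rewrite invr_ge0 ler0n.
rewrite -rmorphD -(rmorph1 (real_complex R)) -rmorphD lecR.
exact: Hmain.
Qed.
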